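(* Let $n\ge 1$ and write $[i,j]=\{i,i+1,\dots,j\}\subseteq[n]$ for $i\le j$. The rowmotion orbits on $\mathcal{IC}([n])$ are exactly: (a) the orbit $\{\emptyset,[n]\}$ of size $2$ (with $\mathrm{Row}(\emptyset)=[n]$, $\mathrm{Row}([n])=\emptyset$); (b) for each integer $k$ with $1\le k<\frac n2$ (there are $\lfloor\frac{n-1}{2}\rfloor$ of them), an orbit of size $n+2$, \[\{[1,k],[2,k+1],\dots,[n-k+1,n],[1,n-k],[2,n-k+1],\dots,[k+1,n]\},\] in which $\mathrm{Row}$ maps each listed set to the next one and $[k+1,n]$ back to $[1,k]$; concretely, $\mathrm{Row}([i,j])=[i+1,j+1]$ for $j<n$ and $\mathrm{Row}([i,n])=[1,i-1]$ for $i\ge 2$; (c) when $n$ is even, one further orbit $\{[1,\frac n2],[2,\frac n2+1],\dots,[\frac n2+1,n]\}$ of size $\frac{n+2}{2}$. Consequently the order of rowmotion on $\mathcal{IC}([n])$ divides $2(n+2)$ when $n$ is odd and divides $n+2$ when $n$ is even.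
   Context: $[n]$ denotes the chain poset $1<2<\cdots<n$. All posets are finite. For a poset $P$, a subset $I\subseteq P$ is interval-closed if for all $x,y\in I$ and $z\in P$ with $x\le z\le y$ we have $z\in I$; $\mathcal{IC}(P)$ is the set of interval-closed subsets of $P$. For $x\in P$ the toggle $t_x:\mathcal{IC}(P)\to\mathcal{IC}(P)$ is defined by $t_x(I)=I\triangle\{x\}$ if $I\triangle\{x\}\in\mathcal{IC}(P)$ and $t_x(I)=I$ otherwise. Rowmotion is $\mathrm{Row}=t_{x_1}\circ t_{x_2}\circ\cdots\circ t_{x_N}:\mathcal{IC}(P)\to\mathcal{IC}(P)$, where $(x_1,\dots,x_N)$ is a linear extension of $P$ (so elements are toggled from the top of the poset down). The order of rowmotion is the least common multiple of its orbit sizes. *)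

(* Defs.v *)
From mathcomp Require Import all_boot.
Set Implicit Arguments. Unset Strict Implicit. Unset Printing Implicit Defensive.

Section General.
Variables (T : finType) (le : rel T).

Definition interval_closed (I : {set T}) : bool :=
  [forall x in I, forall y in I, forall z, (le x z && le z y) ==> (z \in I)].

Definition toggle (x : T) (I : {set T}) : {set T} :=
  let J := if x \in I then I :\ x else x |: I in
  if interval_closed J then J else I.

(* Row = t_{x1} o t_{x2} o ... o t_{xN} for the linear extension ext = [x1;...;xN] *)
Definition rowmotion (ext : seq T) (I : {set T}) : {set T} :=
  foldr toggle I ext.
End General.

(* The chain [n]: element x : 'I_n represents the integer x+1 in {1,...,n}. *)
Definition chain_le (n : nat) : rel 'I_n := fun x y => (x <= y)%N.

Definition IC (n : nat) (I : {set 'I_n}) : bool := interval_closed (@chain_le n) I.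

Definition Row (n : nat) : {set 'I_n} -> {set 'I_n} :=
  rowmotion (@chain_le n) (enum 'I_n).

(* the interval [i,j] = {i,...,j} of [n] (1-based); empty if j < i *)
Definition itv (n i j : nat) : {set 'I_n} :=
  [set x : 'I_n | (i <= x.+1 <= j)%N].

Definition row_order (n : nat) : nat :=
  \big[lcmn/1%N]_(A : {set 'I_n} | IC A) fingraph.order (@Row n) A.

(* Main.v *)
Require Import Defs.
From mathcomp Require Import all_boot zify.
Set Implicit Arguments. Unset Strict Implicit. Unset Printing Implicit Defensive.
Set Warnings "-notation-overridden".

Definition iv n a b : {set 'I_n} := [set x : 'I_n | (a <= x < b)%N].

Lemma IC_iv n a b : IC (iv n a b).
Proof.
apply/forallP=> x; apply/implyP; rewrite inE => hx.
apply/forallP=> y; apply/implyP; rewrite inE => hy.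
apply/forallP=> z; apply/implyP => /andP[h1 h2]; rewrite inE.
rewrite /chain_le in h1 h2; lia.
Qed.

Lemma notIC n (A : {set 'I_n}) (x y z : 'I_n) :
  x \in A -> y \in A -> z \notin A -> (x <= z <= y)%N -> ~~ IC A.
Proof.
move=> hx hy hz hxzy; apply/negP => /forallP/(_ x)/implyP/(_ hx)/forallP/(_ y)
  /implyP/(_ hy)/forallP/(_ z)/implyP/(_ hxzy) hz'.
by rewrite hz' in hz.
Qed.

Definition R n m (I : {set 'I_n}) :=
  foldr (toggle (@chain_le n)) I (drop m (enum 'I_n)).

Lemma R0 n (I : {set 'I_n}) : Row I = R 0 I.
Proof. by rewrite /R drop0. Qed.

Lemma Rn n (I : {set 'I_n}) : R n I = I.
Proof. by rewrite /R drop_oversize // size_enum_ord. Qed.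

Lemma RS n m (hm : (m < n)%N) I :
  R m I = toggle (@chain_le n) (Ordinal hm) (R m.+1 I).
Proof.
rewrite /R (drop_nth (Ordinal hm)) ?size_enum_ord //=; congr toggle.
by apply/val_inj; rewrite /= nth_enum_ord.
Qed.

Lemma desc_ind (P : nat -> Prop) lo hi :
  P hi -> (forall m, (lo <= m < hi)%N -> P m.+1 -> P m) ->
  forall m, (lo <= m <= hi)%N -> P m.
Proof.
move=> Ph IH m hm; have [d hd] : exists d, d = hi - m by eexists.
elim: d m hm hd => [|d IHd] m hm hd.
  by have -> : m = hi by lia.
apply: IH; first lia.
apply: IHd; lia.
Qed.

Lemma R_const n I S lo hi : (lo <= hi <= n)%N -> R hi I = S ->
  (forall x : 'I_n, (lo <= x < hi)%N -> toggle (@chain_le n) x S = S) ->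
  R lo I = S.
Proof.
move=> /andP[hlh hhn] hS hT.
apply: (@desc_ind (fun m => R m I = S) lo hi) => //; last lia.
move=> m hm IH; have hmn : (m < n)%N by lia.
by rewrite (RS hmn) IH hT.
Qed.

Lemma iv0 n a b : (b <= a)%N -> iv n a b = set0.
Proof. move=> h; apply/setP=> x; rewrite !inE; lia. Qed.

Lemma toggleE n (x : 'I_n) S :
  toggle (@chain_le n) x S =
  let J := if x \in S then S :\ x else x |: S in if IC J then J else S.
Proof. by []. Qed.

Lemma phaseA n a : (a <= n)%N -> forall m, (a <= m <= n)%N ->
  R m (iv n a n) = iv n a m.
Proof.
move=> han; apply: desc_ind; first by rewrite Rn.
move=> m hm IH; have hmn : (m < n)%N by lia.
rewrite (RS hmn) IH toggleE /=.
have -> : Ordinal hmn \in iv n a m.+1 by rewrite inE /=; lia.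
have -> : iv n a m.+1 :\ Ordinal hmn = iv n a m.
  by apply/setP=> x; rewrite !inE -val_eqE /=; lia.
by rewrite IC_iv.
Qed.

Lemma phaseB n I c : (c <= n)%N -> R c I = set0 -> forall m, (m <= c)%N ->
  R m I = iv n m c.
Proof.
move=> hcn h0 m hm.
have H := (@desc_ind (fun m => R m I = iv n m c) 0 c); apply: H; last by lia.
  by rewrite iv0.

move=> p hp IH; have hpn : (p < n)%N by lia.
rewrite (RS hpn) IH toggleE /=.
have -> : (Ordinal hpn \in iv n p.+1 c) = false by rewrite inE /=; lia.
have -> : Ordinal hpn |: iv n p.+1 c = iv n p c.
  by apply/setP=> x; rewrite !inE -val_eqE /=; lia.
by rewrite IC_iv.
Qed.

Lemma Row_top n a : (a <= n)%N -> Row (iv n a n) = iv n 0 a.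
Proof.
move=> han; rewrite R0; apply: (@phaseB n _ a) => //.
by rewrite phaseA ?iv0 //; lia.
Qed.

Lemma toggle_stay n (x : 'I_n) (S : {set 'I_n}) :
  ~~ IC (if x \in S then S :\ x else x |: S) -> toggle (@chain_le n) x S = S.
Proof. by move=> h; rewrite toggleE /=; move: h; rewrite /IC => /negbTE ->. Qed.

Lemma Row_shift n a b : (a < b < n)%N -> Row (iv n a b) = iv n a.+1 b.+1.
Proof.
move=> /andP[hab hbn]; have han : (a < n)%N by lia.
set oa := Ordinal han; set ob := Ordinal hbn.
have E1 : R b.+1 (iv n a b) = iv n a b.
  apply: (@R_const _ _ _ b.+1 n); first lia; first by rewrite Rn.
  move=> x hx; apply: toggle_stay.
  have -> : (x \in iv n a b) = false by rewrite inE; lia.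
  apply: (@notIC _ _ oa x ob); rewrite ?inE -?val_eqE /=; lia.
have E2 : R b (iv n a b) = iv n a b.+1.
  rewrite (RS hbn) E1 toggleE /=.
  have -> : (Ordinal hbn \in iv n a b) = false by rewrite inE /=; lia.
  have -> : Ordinal hbn |: iv n a b = iv n a b.+1.
    by apply/setP=> x; rewrite !inE -val_eqE /=; lia.
  by rewrite IC_iv.
have E3 : R a.+1 (iv n a b) = iv n a b.+1.
  apply: (@R_const _ _ _ a.+1 b); first lia; first by [].
  move=> x hx; apply: toggle_stay.
  have -> : (x \in iv n a b.+1) = true by rewrite inE; lia.
  apply: (@notIC _ _ oa ob x); rewrite ?inE -?val_eqE /=; lia.
have E4 : R a (iv n a b) = iv n a.+1 b.+1.
  rewrite (RS han) E3 toggleE /=.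
  have -> : (Ordinal han \in iv n a b.+1) = true by rewrite inE /=; lia.
  have -> : iv n a b.+1 :\ Ordinal han = iv n a.+1 b.+1.
    by apply/setP=> x; rewrite !inE -val_eqE /=; lia.
  by rewrite IC_iv.
rewrite R0; apply: (@R_const _ _ _ 0 a); first lia; first by [].
move=> x hx; apply: toggle_stay.
have -> : (x \in iv n a.+1 b.+1) = false by rewrite inE; lia.
apply: (@notIC _ _ x ob oa); rewrite ?inE -?val_eqE /=; lia.
Qed.

Lemma cyc (T : finType) (f : T -> T) x m : (0 < m)%N -> iter m f x = x ->
  uniq (traject f x m) ->
  [/\ orbit f x = traject f x m, order f x = m & fcycle f (traject f x m)].
Proof.
case: m => // m _ hit hu.
have hc : fcycle f (traject f x m.+1).
  rewrite /= -[X in rcons _ X]hit iterSr -trajectSr.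
  by apply/fpathP; exists m.+1.
have hx : x \in traject f x m.+1 by rewrite inE eqxx.
split => //.
  by rewrite (orbitE hc hu hx) /= eqxx rot0.
by rewrite (order_cycle hc hu hx) size_traject.
Qed.

Lemma traj_map (T : Type) (f : T -> T) (g : nat -> T) m : forall s,
  (forall i, (s <= i)%N -> (i.+1 < s + m)%N -> f (g i) = g i.+1) ->
  traject f (g s) m = map g (iota s m).
Proof.
elim: m => [//|m IH] s h /=; congr cons.
case: m IH h => [//|m] IH h.
rewrite h; [|lia|lia].
by apply: IH => i h1 h2; apply: h; lia.
Qed.

Lemma iter_map (T : Type) (f : T -> T) (g : nat -> T) m s :
  (forall i, (s <= i < s + m)%N -> f (g i) = g i.+1) ->
  iter m f (g s) = g (s + m).
Proof.
elim: m => [|m IH] h; first by rewrite addn0.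
rewrite iterS IH; last by move=> i hi; apply: h; lia.
by rewrite h ?addnS //; lia.
Qed.

Lemma itv_iv n i j : (1 <= i)%N -> itv n i j = iv n (i - 1) j.
Proof. by move=> h; apply/setP=> x; rewrite !inE; lia. Qed.

Lemma IC_itv n i j : IC (itv n i j).
Proof.
apply/forallP=> x; apply/implyP; rewrite inE => hx.
apply/forallP=> y; apply/implyP; rewrite inE => hy.
apply/forallP=> z; apply/implyP => /andP[h1 h2]; rewrite inE.
rewrite /chain_le in h1 h2; lia.
Qed.

Lemma Row_itv n i j : (1 <= i)%N -> (i <= j)%N -> (j < n)%N ->
  Row (itv n i j) = itv n i.+1 j.+1.
Proof.
move=> h1 h2 h3; rewrite !itv_iv // Row_shift; last lia.
congr iv; lia.
Qed.

Lemma Row_itv_top n i : (2 <= i <= n)%N -> Row (itv n i n) = itv n 1 i.-1.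
Proof.
move=> h; rewrite !itv_iv //; last lia.
rewrite Row_top; last lia.
congr iv; lia.
Qed.

Lemma Row_set0 n : Row (set0 : {set 'I_n}) = itv n 1 n.
Proof. by rewrite -(@iv0 n n n) // Row_top // itv_iv. Qed.

Lemma Row_full n : Row (itv n 1 n) = set0.
Proof. by rewrite itv_iv // Row_top // iv0. Qed.

Lemma itv_inj n i j i' j' : (1 <= i <= j)%N -> (j <= n)%N ->
  (1 <= i' <= j')%N -> (j' <= n)%N -> itv n i j = itv n i' j' -> i = i' /\ j = j'.
Proof.
move=> h1 h2 h3 h4 E.
have a1 : (i - 1 < n)%N by lia. have a2 : (j - 1 < n)%N by lia.
have a3 : (i' - 1 < n)%N by lia. have a4 : (j' - 1 < n)%N by lia.
move: (E) => /setP/(_ (Ordinal a1)); rewrite !inE /=.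
move: (E) => /setP/(_ (Ordinal a2)); rewrite !inE /=.
move: (E) => /setP/(_ (Ordinal a3)); rewrite !inE /=.
move: (E) => /setP/(_ (Ordinal a4)); rewrite !inE /=.
move=> e1 e2 e3 e4.
have f1 : (i' <= (i - 1).+1 <= j')%N by rewrite -e4; lia.
have f2 : (i' <= (j - 1).+1 <= j')%N by rewrite -e3; lia.
have f3 : (i <= (i' - 1).+1 <= j)%N by rewrite e2; lia.
have f4 : (i <= (j' - 1).+1 <= j)%N by rewrite e1; lia.
lia.
Qed.

Lemma orbit_a n : (1 <= n)%N ->
  [/\ orbit (@Row n) set0 = [:: set0; itv n 1 n], order (@Row n) set0 = 2
    & fcycle (@Row n) [:: set0; itv n 1 n]].
Proof.
move=> hn.
have E : traject (@Row n) set0 2 = [:: set0; itv n 1 n] by rewrite /= Row_set0.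
rewrite -E; apply: cyc => //; first by rewrite /= Row_set0 Row_full.
rewrite E /= andbT inE; apply/eqP => /setP/(_ (Ordinal hn)).
by rewrite !inE /=; lia.
Qed.

Definition Lb n k := [seq itv n i (i + k - 1) | i <- iota 1 (n - k + 1)] ++
       [seq itv n i (i + (n - k) - 1) | i <- iota 1 (k + 1)].

Lemma orbit_b n k : (1 <= k)%N -> (k.*2 < n)%N ->
  [/\ orbit (@Row n) (itv n 1 k) = Lb n k, order (@Row n) (itv n 1 k) = n + 2
    & fcycle (@Row n) (Lb n k)].
Proof.
move=> hk hkn.
pose g i := itv n i (i + k - 1); pose h i := itv n i (i + (n - k) - 1).
have Hg : forall i, (1 <= i)%N -> (i < n - k + 1)%N -> Row (g i) = g i.+1.
  move=> i h1 h2; rewrite /g Row_itv; [congr itv|..]; lia.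
have Hh : forall i, (1 <= i)%N -> (i < k + 1)%N -> Row (h i) = h i.+1.
  move=> i h1 h2; rewrite /h Row_itv; [congr itv|..]; lia.
have Ex : itv n 1 k = g 1 by rewrite /g; congr itv; lia.
have I1 : iter (n - k + 1) (@Row n) (g 1) = h 1.
  rewrite addn1 iterS (@iter_map _ _ g); last by move=> i hi; apply: Hg; lia.
  rewrite /g /h (_ : 1 + (n - k) + k - 1 = n)%N; last lia.
  rewrite Row_itv_top; [congr itv|]; lia.
have I2 : iter (k + 1) (@Row n) (h 1) = g 1.
  rewrite addn1 iterS (@iter_map _ _ h); last by move=> i hi; apply: Hh; lia.
  rewrite /g /h (_ : 1 + k + (n - k) - 1 = n)%N; last lia.
  rewrite Row_itv_top; [congr itv|]; lia.
have T : traject (@Row n) (itv n 1 k) (n + 2) = Lb n k.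
  rewrite Ex (_ : n + 2 = (n - k + 1) + (k + 1))%N; last lia.
  rewrite trajectD I1 (@traj_map _ _ g); last by move=> i h1 h2; apply: Hg; lia.
  rewrite (@traj_map _ _ h) //; by move=> i h1 h2; apply: Hh; lia.
rewrite -T; apply: cyc; first lia.
  rewrite Ex (_ : n + 2 = (k + 1) + (n - k + 1))%N; last lia.
  by rewrite iterD I1 I2.
rewrite T /Lb cat_uniq; apply/and3P; split.
- rewrite map_inj_in_uniq ?iota_uniq // => i i' /[!mem_iota] hi hi' E.
  by have [] := itv_inj _ _ _ _ E; lia.
- apply/hasPn => A /mapP[i /[!mem_iota] hi ->]; apply/mapP => -[i' /[!mem_iota] hi' E].
  by have [] := itv_inj _ _ _ _ E; lia.
- rewrite map_inj_in_uniq ?iota_uniq // => i i' /[!mem_iota] hi hi' E.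
  by have [] := itv_inj _ _ _ _ E; lia.
Qed.

Definition Lc n := [seq itv n i (i + n./2 - 1) | i <- iota 1 (n./2 + 1)].

Lemma orbit_c n : (1 <= n)%N -> ~~ odd n ->
  [/\ orbit (@Row n) (itv n 1 n./2) = Lc n,
      order (@Row n) (itv n 1 n./2) = (n + 2) %/ 2
    & fcycle (@Row n) (Lc n)].
Proof.
move=> hn hev.
have hk : (n./2).*2 = n by have := odd_double_half n; rewrite (negbTE hev).
rewrite /Lc; move: hk; set k := n./2 => hk.
pose g i := itv n i (i + k - 1).
have Hg : forall i, (1 <= i)%N -> (i < k + 1)%N -> Row (g i) = g i.+1.
  move=> i h1 h2; rewrite /g Row_itv; [congr itv|..]; lia.
have Ex : itv n 1 k = g 1 by rewrite /g; congr itv; lia.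
have I1 : iter (k + 1) (@Row n) (g 1) = g 1.
  rewrite addn1 iterS (@iter_map _ _ g); last by move=> i hi; apply: Hg; lia.
  rewrite /g (_ : 1 + k + k - 1 = n)%N; last lia.
  rewrite Row_itv_top; [congr itv|]; lia.
have T : traject (@Row n) (itv n 1 k) (k + 1) = [seq g i | i <- iota 1 (k + 1)].
  by rewrite Ex (@traj_map _ _ g) //; move=> i h1 h2; apply: Hg; lia.
have -> : ((n + 2) %/ 2 = k + 1)%N.
  by rewrite -hk (_ : k.*2 + 2 = (k + 1) * 2)%N ?mulnK //; lia.
rewrite -T; apply: cyc; first lia.
  by rewrite Ex I1.
rewrite T map_inj_in_uniq ?iota_uniq // => i i' /[!mem_iota] hi hi' E.
by have [] := itv_inj _ _ _ _ E; lia.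
Qed.

Lemma IC_class n (A : {set 'I_n}) : IC A ->
  A = set0 \/ exists i j, [/\ (1 <= i)%N, (i <= j)%N, (j <= n)%N & A = itv n i j].
Proof.
move=> hA; case: (set_0Vmem A) => [->|[x hx]]; [by left | right].
case: (@arg_minnP _ x (fun y => y \in A) (@nat_of_ord n) hx) => a ha amin.
case: (@arg_maxnP _ x (fun y => y \in A) (@nat_of_ord n) hx) => b hb bmax.
exists a.+1, b.+1; split; [done | by have := amin b hb; lia | exact: ltn_ord | ].
apply/setP=> y; rewrite inE; apply/idP/idP => [hy|hy].
  by have := amin y hy; have := bmax y hy; lia.
move: hA => /forallP/(_ a)/implyP/(_ ha)/forallP/(_ b)/implyP/(_ hb)/forallP/(_ y)
  /implyP; apply; rewrite /chain_le; lia.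
Qed.

Lemma IC0 n : IC (set0 : {set 'I_n}).
Proof. by rewrite (_ : set0 = itv n 1 0) ?IC_itv //; apply/setP=> x; rewrite !inE; lia. Qed.

Lemma row_order_dvd n D : (forall A : {set 'I_n}, IC A -> order (@Row n) A %| D) ->
  row_order n %| D.
Proof.
move=> h; rewrite /row_order; apply: (big_ind (fun d => d %| D)) => //.
by move=> x y hx hy; rewrite dvdn_lcm hx hy.
Qed.

Theorem theorem3p2 (n : nat) (hn : (1 <= n)%N) :
  (* (a) *)
  [/\ Row (set0 : {set 'I_n}) = itv n 1 n, Row (itv n 1 n) = set0
    & order (@Row n) set0 = 2] /\
  (* the concrete action of Row on intervals *)
  (forall i j, (1 <= i)%N -> (i <= j)%N -> (j < n)%N ->
     Row (itv n i j) = itv n i.+1 j.+1) /\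
  (forall i, (2 <= i <= n)%N -> Row (itv n i n) = itv n 1 i.-1) /\
  (* (b) *)
  (forall k, (1 <= k)%N -> (k.*2 < n)%N ->
     orbit (@Row n) (itv n 1 k) =
       [seq itv n i (i + k - 1) | i <- iota 1 (n - k + 1)] ++
       [seq itv n i (i + (n - k) - 1) | i <- iota 1 (k + 1)] /\
     order (@Row n) (itv n 1 k) = n + 2) /\
  (* (c) *)
  (~~ odd n ->
     orbit (@Row n) (itv n 1 n./2) =
       [seq itv n i (i + n./2 - 1) | i <- iota 1 (n./2 + 1)] /\
     order (@Row n) (itv n 1 n./2) = (n + 2) %/ 2) /\
  (* these are exactly the orbits: they partition IC([n]) *)
  (forall A : {set 'I_n}, IC A <->
     [\/ A \in orbit (@Row n) set0,
         exists2 k, (1 <= k)%N && (k.*2 < n)%N & A \in orbit (@Row n) (itv n 1 k)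
       | ~~ odd n /\ A \in orbit (@Row n) (itv n 1 n./2)]) /\
  (* consequence on the order of rowmotion *)
  (if odd n then row_order n %| 2 * (n + 2) else row_order n %| n + 2).
Proof.
have [Oa1 Oa2 Oa3] := orbit_a hn.
have Part : forall A : {set 'I_n}, IC A <->
     [\/ A \in orbit (@Row n) set0,
         exists2 k, (1 <= k)%N && (k.*2 < n)%N & A \in orbit (@Row n) (itv n 1 k)
       | ~~ odd n /\ A \in orbit (@Row n) (itv n 1 n./2)].
  move=> A; split.
    case/IC_class => [->|[i [j [h1 h2 h3 ->]]]]; first by apply: Or31; exact: in_orbit.
    have [e|ne] := boolP ((i == 1) && (j == n)).
      apply: Or31; case/andP: e => /eqP -> /eqP ->.
      by rewrite Oa1 !inE eqxx orbT.
    set s := (j - i + 1)%N.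
    have [hs|hs|hs] := ltngtP s.*2 n.
    - apply: Or32; exists s; first by apply/andP; split => //; lia.
      have hs1 : (1 <= s)%N by lia.
      have [-> _ _] := orbit_b hs1 hs.
      rewrite /Lb mem_cat; apply/orP; left; apply/mapP; exists i.
        by rewrite mem_iota; lia.
      by congr itv; lia.
    - apply: Or32; exists (n - s)%N; first by apply/andP; split => //; lia.
      have hs1 : (1 <= n - s)%N by lia.
      have hs2 : ((n - s).*2 < n)%N by lia.
      have [-> _ _] := orbit_b hs1 hs2.
      rewrite /Lb mem_cat; apply/orP; right; apply/mapP; exists i.
        by rewrite mem_iota; lia.
      by congr itv; lia.
    - apply: Or33; have he : n./2 = s by rewrite -hs doubleK.
      split; first by rewrite -hs odd_double.
      have hev : ~~ odd n by rewrite -hs odd_double.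
      have [-> _ _] := orbit_c hn hev.
      rewrite /Lc he; apply/mapP; exists i.
        by rewrite mem_iota; lia.
      by congr itv; lia.
  case.
  - rewrite Oa1 !inE => /orP[/eqP -> | /eqP ->]; [exact: IC0 | exact: IC_itv].
  - move=> [k /andP[hk hkn]]; have [-> _ _] := orbit_b hk hkn.
    by rewrite mem_cat => /orP[] /mapP[i _ ->]; exact: IC_itv.
  - move=> [hev]; have [-> _ _] := orbit_c hn hev.
    by move=> /mapP[i _ ->]; exact: IC_itv.
split; first by rewrite Row_set0 Row_full.
split; first by move=> i j h1 h2 h3; apply: Row_itv.
split; first by move=> i h; apply: Row_itv_top.
split; first by move=> k hk hkn; have [-> -> _] := orbit_b hk hkn.
split; first by move=> hev; have [-> -> _] := orbit_c hn hev.
split; first exact: Part.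
have key : forall D, 2 %| D -> n + 2 %| D -> (~~ odd n -> (n + 2) %/ 2 %| D) ->
    row_order n %| D.
  move=> D d1 d2 d3; apply: row_order_dvd => A /Part [hA | [k /andP[hk hkn] hA] | [hev hA]].
  - by rewrite Oa1 in hA; rewrite (eq_order_cycle Oa3 (mem_head _ _) hA) Oa2.
  - have [E1 E2 E3] := orbit_b hk hkn; rewrite E1 in hA.
    have hx : itv n 1 k \in Lb n k by rewrite -E1 in_orbit.
    by rewrite (eq_order_cycle E3 hx hA) E2.
  - have [E1 E2 E3] := orbit_c hn hev; rewrite E1 in hA.
    have hx : itv n 1 n./2 \in Lc n by rewrite -E1 in_orbit.
    by rewrite (eq_order_cycle E3 hx hA) E2; apply: d3.
case: ifP => ho; apply: key.
- by rewrite dvdn_mulr.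
- by rewrite dvdn_mull.
- by rewrite ho.
- by rewrite dvdn2 oddD ho.
- by [].
- by move=> _; apply: dvdn_div; rewrite dvdn2 oddD ho.
Qed.
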